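(* Let $\ell\in\{\ell_{lin},\ell_{log}\}$ and suppose the matrix $[X\ Z]\in\mathbb{R}^{n\times(p_1+p_2)}$ is $s$-regular, where $s=s_1+s_2$. Then (SCL) has a global minimizer, (SCL) has only finitely many local minimizers, and each local minimizer $\beta^*$ is a strict (isolated) local minimizer: there exists $\delta>0$ such that $\beta^*$ is the unique minimizer of $f$ over $\{\beta\in\Sigma:\|\beta-\beta^*\|<\delta\}$.
   Context: Data: $X\in\mathbb{R}^{n\times p_1}$, $Z\in\mathbb{R}^{n\times p_2}$ with rows $x_i,z_i$; $y\in\mathbb{R}^n$ ($y\in\{0,1\}^n$ for $\ell_{log}$); $a,b,c>0$; integers $1\le s_j\le p_j$. Losses $\ell_{lin}(\beta;X,y)=\frac12\sum_i(y_i-\langle x_i,\beta\rangle)^2$, $\ell_{log}(\beta;X,y)=\sum_i(\log(1+\exp\langle x_i,\beta\rangle)-y_i\langle x_i,\beta\rangle)$. Objective $f(\beta)=\frac1n[a\ell(\beta_1;X,y)+b\ell(\beta_2;Z,y)+\frac c2\|X\beta_1-Z\beta_2\|^2]$, $\beta=(\beta_1;\beta_2)$. (SCL): minimize $f$ subject to $\|\beta_1\|_0\le s_1,\|\beta_2\|_0\le s_2$; feasible set $\Sigma$. A local minimizer is a feasible point minimizing $f$ over feasible points in some neighborhood. A matrix is $s$-regular if any $s$ of its columns are linearly independent. *)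

(* Defs.v *)
From HB Require Import structures.
From mathcomp Require Import all_boot all_order all_algebra.
From mathcomp Require Import all_classical all_reals all_analysis.
Set Implicit Arguments. Unset Strict Implicit. Unset Printing Implicit Defensive.
Import Order.TTheory GRing.Theory Num.Theory.
Local Open Scope ring_scope.

Inductive loss := LossLin | LossLog.

Section Defs.
Variable R : realType.

Definition sqnorm (m : nat) (v : 'cV[R]_m) : R := \sum_(i < m) (v i 0) ^+ 2.
Definition enorm (m : nat) (v : 'cV[R]_m) : R := Num.sqrt (sqnorm v).

Definition l0norm (m : nat) (v : 'cV[R]_m) : nat := #|[set j : 'I_m | v j 0 != 0]|.

Definition ell (l : loss) (n p : nat) (A : 'M[R]_(n, p)) (y : 'cV[R]_n)
  (bt : 'cV[R]_p) : R :=
  match l with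
  | LossLin => 2^-1 * \sum_(i < n) (y i 0 - (A *m bt) i 0) ^+ 2
  | LossLog => \sum_(i < n) (ln (1 + expR ((A *m bt) i 0)) - y i 0 * (A *m bt) i 0)
  end.

(* objective f, with beta = (beta_1; beta_2) stacked in 'cV_(p1+p2) *)
Definition fobj (l : loss) (n p1 p2 : nat) (X : 'M[R]_(n, p1)) (Z : 'M[R]_(n, p2))
  (y : 'cV[R]_n) (a b c : R) (bt : 'cV[R]_(p1 + p2)) : R :=
  n%:R^-1 * (a * ell l X y (usubmx bt) + b * ell l Z y (dsubmx bt)
             + c / 2 * sqnorm (X *m usubmx bt - Z *m dsubmx bt)).

Definition feasible (p1 p2 s1 s2 : nat) (bt : 'cV[R]_(p1 + p2)) : Prop :=
  (l0norm (usubmx bt : 'cV_p1) <= s1)%N /\ (l0norm (dsubmx bt : 'cV_p2) <= s2)%N.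

Definition s_regular (n p : nat) (A : 'M[R]_(n, p)) (s : nat) : Prop :=
  forall S : {set 'I_p}, #|S| = s ->
    forall v : 'cV[R]_p, (forall j, j \notin S -> v j 0 = 0) ->
      A *m v = 0 -> v = 0.

Definition global_minimizer (p1 p2 s1 s2 : nat) (f : 'cV[R]_(p1 + p2) -> R)
  (bt : 'cV[R]_(p1 + p2)) : Prop :=
  feasible s1 s2 bt /\ forall bt', feasible s1 s2 bt' -> f bt <= f bt'.

Definition local_minimizer (p1 p2 s1 s2 : nat) (f : 'cV[R]_(p1 + p2) -> R)
  (bt : 'cV[R]_(p1 + p2)) : Prop :=
  feasible s1 s2 bt /\ exists2 d : R, 0 < d &
    forall bt', feasible s1 s2 bt' -> enorm (bt' - bt) < d -> f bt <= f bt'.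

End Defs.

(* Main.v *)
Require Import Defs.
From HB Require Import structures.
From mathcomp Require Import all_boot all_order all_algebra.
From mathcomp Require Import all_classical all_reals all_analysis.
From mathcomp Require Import ring lra.
Import Order.TTheory GRing.Theory Num.Theory.
Local Open Scope ring_scope.
Local Open Scope classical_set_scope.

Section Basic.
Variable R : realType.

Lemma sqnorm_ge0 m (v : 'cV[R]_m) : 0 <= sqnorm v.
Proof. by apply: sumr_ge0 => i _; exact: sqr_ge0. Qed.

Lemma sqnorm_eq0 m (v : 'cV[R]_m) : sqnorm v = 0 -> v = 0.
Proof.
move=> /eqP; rewrite psumr_eq0 => [/allP H|i _]; last exact: sqr_ge0.
apply/matrixP => i j; rewrite ord1 mxE.
by have := H i (mem_index_enum _); rewrite sqrf_eq0 => /eqP.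
Qed.

Lemma sqnorm_entry m (v : 'cV[R]_m) j : v j 0 ^+ 2 <= sqnorm v.
Proof.
rewrite /sqnorm (bigD1 j) //= lerDl; apply: sumr_ge0 => i _; exact: sqr_ge0.
Qed.

Lemma sqnormZ m k (v : 'cV[R]_m) : sqnorm (k *: v) = k ^+ 2 * sqnorm v.
Proof.
rewrite /sqnorm mulr_sumr; apply: eq_bigr => i _; rewrite mxE; ring.
Qed.

Lemma sqnorm_conv m (u w : 'cV[R]_m) t :
  sqnorm (u + t *: (w - u)) =
  (1 - t) * sqnorm u + t * sqnorm w - t * (1 - t) * sqnorm (w - u).
Proof.
rewrite /sqnorm !mulr_sumr -big_split -sumrB /=; apply: eq_bigr => i _.
rewrite !mxE; ring.
Qed.

Lemma enorm_entry m (v : 'cV[R]_m) j : `|v j 0| <= enorm v.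
Proof.
rewrite /enorm -(sqrtr_sqr (v j 0)) ler_sqrt ?sqnorm_ge0 //. exact (sqnorm_entry _ v j).
Qed.

Lemma enormZ m k (v : 'cV[R]_m) : enorm (k *: v) = `|k| * enorm v.
Proof. by rewrite /enorm sqnormZ sqrtrM ?sqr_ge0 // sqrtr_sqr. Qed.

Lemma enorm_gt0 m (v : 'cV[R]_m) : v != 0 -> 0 < enorm v.
Proof.
move=> v0; rewrite /enorm sqrtr_gt0 lt_neqAle sqnorm_ge0 andbT eq_sym.
by apply/eqP => /sqnorm_eq0 /eqP; rewrite (negbTE v0).
Qed.

End Basic.
Section Basic2.
Variable R : realType.

Lemma expR_conv (t a b : R) : 0 <= t -> t <= 1 ->
  expR (t * a + (1 - t) * b) <= t * expR a + (1 - t) * expR b.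
Proof.
move=> t0 t1; have := convex_expR (Itv01 t0 t1) a b.
by rewrite !convRE.
Qed.

Lemma softplus_conv (t p q : R) : 0 <= t -> t <= 1 ->
  ln (1 + expR (t * p + (1 - t) * q)) <=
  t * ln (1 + expR p) + (1 - t) * ln (1 + expR q).
Proof.
move=> t0 t1.
have A0 : 0 < 1 + expR p by rewrite addr_gt0 ?expR_gt0.
have B0 : 0 < 1 + expR q by rewrite addr_gt0 ?expR_gt0.
set A := 1 + expR p in A0 *; set B := 1 + expR q in B0 *.
have eA : A = 1 + expR p by []. have eB : B = 1 + expR q by [].
clearbody A B.
set L := t * ln A + (1 - t) * ln B.
have eL : t * ln A + (1 - t) * ln B = L by [].
clearbody L.
set m := t * p + (1 - t) * q.
have em : t * p + (1 - t) * q = m by [].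
clearbody m.
have h1 := expR_conv t (- ln A) (- ln B) t0 t1.
have h2 := expR_conv t (p - ln A) (q - ln B) t0 t1.
have rA : expR (- ln A) = A^-1 by rewrite expRN lnK ?posrE.
have rB : expR (- ln B) = B^-1 by rewrite expRN lnK ?posrE.
have rA' : expR (p - ln A) = expR p / A by rewrite expRD rA.
have rB' : expR (q - ln B) = expR q / B by rewrite expRD rB.
rewrite rA rB in h1; rewrite rA' rB' in h2.
have e1 : t * - ln A + (1 - t) * - ln B = - L by rewrite -eL; ring.
have e2 : t * (p - ln A) + (1 - t) * (q - ln B) = m + - L by rewrite -eL -em; ring.
rewrite e1 expRN in h1; rewrite e2 expRD expRN in h2.
have K0 : 0 < expR L by exact: expR_gt0.
have hs : (1 + expR m) * (expR L)^-1 <= 1.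
  apply: (le_trans (y := t / A + (1 - t) / B + (t * (expR p / A) + (1 - t) * (expR q / B)))).
    by rewrite mulrDl mul1r; exact: lerD.
  have -> : t / A + (1 - t) / B + (t * (expR p / A) + (1 - t) * (expR q / B)) =
     t * ((1 + expR p) / A) + (1 - t) * ((1 + expR q) / B) by ring.
  by rewrite eA eB !divff ?gt_eqF // !mulr1 subrKC.
have hK : 1 + expR m <= expR L.
  by move: hs; rewrite ler_pdivrMr // mul1r.
rewrite -[X in _ <= X](expRK L).
by rewrite ler_ln ?posrE ?addr_gt0 ?expR_gt0.
Qed.

End Basic2.
Lemma extend_set (T : finType) (A : {set T}) k :
  (#|A| <= k <= #|T|)%N -> exists S : {set T}, A \subset S /\ #|S| = k.
Proof.
move=> /andP[]; move: {2}(k - #|A|)%N (erefl (k - #|A|)%N) => d.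
elim: d A => [|d IH] A hd hAk hkT.
  by exists A; split => //; apply/eqP; rewrite eqn_leq hAk /= -subn_eq0 hd.
have hlt : (#|A| < #|T|)%N by apply: (leq_trans _ hkT); rewrite -subn_gt0 hd.
have [x xA] : exists x, x \notin A.
  case: (pickP [pred x | x \notin A]) => [x xA|H]; first by exists x.
  have eA : A = [set: T]%SET by apply/setP => x; rewrite inE; move: (H x) => /= /negbFE.
  by move: hlt; rewrite eA cardsT ltnn.
have h1 : (k - #|x |: A|)%N = d by rewrite cardsU1 xA add1n subnS hd.
have h2 : (#|x |: A| <= k)%N by rewrite cardsU1 xA add1n -subn_gt0 hd.
have [S [AS cS]] := IH (x |: A) h1 h2 hkT.
exists S; split => //; apply/fintype.subsetP => z zA; apply: (fintype.subsetP AS); by rewrite !inE zA orbT.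
Qed.

Section Lin.
Variable R : realType.

Lemma l0norm_mono m (u v : 'cV[R]_m) :
  (forall j, v j 0 = 0 -> u j 0 = 0) -> (l0norm u <= l0norm v)%N.
Proof.
move=> H; apply: subset_leq_card; apply/fintype.subsetP => j; rewrite !inE.
by apply: contraNN => /eqP /H ->.
Qed.

Lemma feasible_mono p1 p2 s1 s2 (u v : 'cV[R]_(p1 + p2)) :
  (forall j, v j 0 = 0 -> u j 0 = 0) -> feasible s1 s2 v -> feasible s1 s2 u.
Proof.
move=> H [h1 h2]; split.
  apply: leq_trans h1; apply: l0norm_mono => j; rewrite !mxE; exact: H.
apply: leq_trans h2; apply: l0norm_mono => j; rewrite !mxE; exact: H.
Qed.

Lemma usub_lin p1 p2 (u w : 'cV[R]_(p1 + p2)) t :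
  usubmx (u + t *: (w - u)) = usubmx u + t *: (usubmx w - usubmx u).
Proof. by apply/matrixP => i j; rewrite !mxE. Qed.

Lemma dsub_lin p1 p2 (u w : 'cV[R]_(p1 + p2)) t :
  dsubmx (u + t *: (w - u)) = dsubmx u + t *: (dsubmx w - dsubmx u).
Proof. by apply/matrixP => i j; rewrite !mxE. Qed.

End Lin.

Import numFieldTopology.Exports numFieldNormedType.Exports.

Arguments sqnorm_ge0 {R m}. Arguments sqnorm_eq0 {R m v}.
Arguments sqnorm_entry {R m}. Arguments sqnormZ {R m}.
Arguments enorm_entry {R m}. Arguments enormZ {R m}. Arguments enorm_gt0 {R m v}.
Arguments l0norm_mono {R m u v}. Arguments feasible_mono {R p1 p2 s1 s2 u v}.
Arguments usub_lin {R p1 p2}. Arguments dsub_lin {R p1 p2}.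

Lemma supp_bound (R : realType) m (x : 'cV[R]_m) :
  exists2 e : R, 0 < e & forall j, x j 0 != 0 -> e <= `|x j 0|.
Proof.
pose F j := if x j 0 == 0 then 1 else `|x j 0|.
have Fpos j : 0 < F j by rewrite /F; case: eqP => // /eqP; rewrite normr_gt0.
exists (\big[Num.min/1]_j F j).
  by apply: (big_ind (fun v => 0 < v)) => // u v u0 v0; rewrite lt_min u0 v0.
move=> j nz; rewrite (bigD1 j) //= ge_min; apply/orP; left.
by rewrite /F (negbTE nz).
Qed.

Section Main.
Variables (R : realType) (l : loss) (n p1 p2 s1 s2 : nat)
  (X : 'M[R]_(n, p1)) (Z : 'M[R]_(n, p2)) (y : 'cV[R]_n) (a b c : R).
Hypotheses (hn : (0 < n)%N) (ha : 0 < a) (hb : 0 < b) (hc : 0 < c)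
  (hs1 : (1 <= s1 <= p1)%N) (hs2 : (1 <= s2 <= p2)%N)
  (hy : l = LossLog -> forall i, y i 0 = 0 \/ y i 0 = 1)
  (hreg : s_regular (row_mx X Z) (s1 + s2)).

Definition Mv (bt : 'cV[R]_(p1 + p2)) : 'cV[R]_n :=
  X *m usubmx bt - Z *m dsubmx bt.

Lemma Mv_inj bt : feasible s1 s2 bt -> Mv bt = 0 -> bt = 0.
Proof.
move=> [h1 h2] hM.
have [S1 [sub1 c1]] : exists S : {set 'I_p1},
    [set j | usubmx bt j 0 != 0]%SET \subset S /\ #|S| = s1.
  apply: extend_set; rewrite card_ord; case/andP: hs1 => _ ->.
  by rewrite andbT.
have [S2 [sub2 c2]] : exists S : {set 'I_p2},
    [set j | dsubmx bt j 0 != 0]%SET \subset S /\ #|S| = s2.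
  apply: extend_set; rewrite card_ord; case/andP: hs2 => _ ->.
  by rewrite andbT.
pose S := ([set lshift p2 i | i in S1] :|: [set rshift p1 i | i in S2])%SET.
have cS : #|S| = (s1 + s2)%N.
  have -> : (s1 + s2)%N = (#|[set lshift p2 i | i in S1]%SET| +
      #|[set rshift p1 i | i in S2]%SET|)%N.
    rewrite card_imset; last exact: lshift_inj.
    rewrite card_imset; last exact: rshift_inj.
    by rewrite c1 c2.
  apply/eqP; rewrite /S (leq_card_setU _ _).2.
  rewrite disjoint_subset; apply/fintype.subsetP => j /imsetP[i _ ->].
  rewrite inE; apply/negP => /imsetP[k _ /(congr1 val)] /= e.
  by have := ltn_ord i; rewrite e ltnNge leq_addr.
pose w := col_mx (usubmx bt) (- dsubmx bt).
have hw : w = 0.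
  apply: (hreg _ cS).
    move=> j; rewrite -(fintype.splitK j); case: (fintype.split j) => [i|k] /=.
      rewrite /w col_mxEu => jS; apply/eqP; apply: contraNT jS => nz.
      rewrite !inE; apply/orP; left; apply/imsetP; exists i => //.
      by apply: (fintype.subsetP sub1); rewrite inE.
    rewrite /w col_mxEd mxE => jS; apply/eqP; rewrite oppr_eq0.
    apply: contraNT jS => nz.
    rewrite !inE; apply/orP; right; apply/imsetP; exists k => //.
    by apply: (fintype.subsetP sub2); rewrite inE.
  by rewrite /w mul_row_col mulmxN.
have := hw; rewrite /w -col_mx0 => /eq_col_mx [hu hd].
rewrite -(vsubmxK bt) hu; move/eqP: hd; rewrite oppr_eq0 => /eqP ->.
by rewrite col_mx0.
Qed.


Lemma ell_conv m (A : 'M[R]_(n, m)) (u w : 'cV[R]_m) t : 0 <= t -> t <= 1 ->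
  ell l A y (u + t *: (w - u)) <= (1 - t) * ell l A y u + t * ell l A y w.
Proof.
move=> t0 t1.
have eA : A *m (u + t *: (w - u)) = A *m u + t *: (A *m w - A *m u).
  by rewrite mulmxDr -scalemxAr mulmxBr.
rewrite /ell eA; move: (A *m u) (A *m w) => z1 z2.
case: l.
- rewrite !mulrA [(1 - t) * _]mulrC [t * 2^-1]mulrC -!mulrA -mulrDr.
  apply: ler_wpM2l; first by rewrite invr_ge0.
  rewrite !mulr_sumr -big_split /=; apply: ler_sum => i _; rewrite !mxE.
  have -> : (y i 0 - (z1 i 0 + t * (z2 i 0 - z1 i 0))) ^+ 2 =
    (1 - t) * (y i 0 - z1 i 0) ^+ 2 + t * (y i 0 - z2 i 0) ^+ 2
    - t * (1 - t) * (z2 i 0 - z1 i 0) ^+ 2 by ring.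
  rewrite lerBlDr lerDl; apply: mulr_ge0; last exact: sqr_ge0.
  by apply: mulr_ge0 => //; rewrite subr_ge0.
- rewrite !mulr_sumr -big_split /=; apply: ler_sum => i _; rewrite !mxE.
  have h0 : 0 <= 1 - t by rewrite subr_ge0.
  have h1 : 1 - t <= 1 by rewrite lerBlDr lerDl.
  have := @softplus_conv _ (1 - t) (z1 i 0) (z2 i 0) h0 h1.
  have -> : (1 - t) * z1 i 0 + (1 - (1 - t)) * z2 i 0 = z1 i 0 + t * (z2 i 0 - z1 i 0) by ring.
  have -> : 1 - (1 - t) = t by ring.
  move=> H; lra.
Qed.


Local Notation f := (fobj l X Z y a b c).

Lemma Mv_lin u w t : Mv (u + t *: (w - u)) = Mv u + t *: (Mv w - Mv u).
Proof.
rewrite /Mv usub_lin dsub_lin !mulmxDr -!scalemxAr !mulmxBr.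
rewrite scalerBr scalerBr scalerBr; apply/matrixP => i j; rewrite !mxE; ring.
Qed.

Lemma MvB u w : Mv (w - u) = Mv w - Mv u.
Proof.
rewrite /Mv; apply/matrixP => i j.
have -> : usubmx (w - u) = usubmx w - usubmx u by apply/matrixP => ? ?; rewrite !mxE.
have -> : dsubmx (w - u) = dsubmx w - dsubmx u by apply/matrixP => ? ?; rewrite !mxE.
by rewrite !mulmxBr !mxE; ring.
Qed.

Lemma f_conv u w t : 0 <= t -> t <= 1 ->
  f (u + t *: (w - u)) <=
  (1 - t) * f u + t * f w - t * (1 - t) * (c / 2 * n%:R^-1) * sqnorm (Mv (w - u)).
Proof.
move=> t0 t1.
have E1 := @ell_conv _ X (usubmx u) (usubmx w) t t0 t1.
have E2 := @ell_conv _ Z (dsubmx u) (dsubmx w) t t0 t1.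
have S := @sqnorm_conv _ _ (Mv u) (Mv w) t.
rewrite -Mv_lin -MvB in S.
have eM : X *m (usubmx u + t *: (usubmx w - usubmx u)) -
    Z *m (dsubmx u + t *: (dsubmx w - dsubmx u)) = Mv (u + t *: (w - u)).
  by rewrite /Mv usub_lin dsub_lin.
rewrite /fobj usub_lin dsub_lin eM S -/(Mv u) -/(Mv w).
move: E1 E2; set E := ell l X y _; set F := ell l Z y _.
move=> E1 E2.
have hA : a * E <= a * ((1 - t) * ell l X y (usubmx u) + t * ell l X y (usubmx w)).
  by apply: ler_wpM2l => //; exact: ltW.
have hB : b * F <= b * ((1 - t) * ell l Z y (dsubmx u) + t * ell l Z y (dsubmx w)).
  by apply: ler_wpM2l => //; exact: ltW.
have hn0 : 0 <= n%:R^-1 :> R by rewrite invr_ge0.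
apply: (le_trans (y := n%:R^-1 * (a * ((1 - t) * ell l X y (usubmx u) + t * ell l X y (usubmx w)) +
  b * ((1 - t) * ell l Z y (dsubmx u) + t * ell l Z y (dsubmx w)) +
  c / 2 * ((1 - t) * sqnorm (Mv u) + t * sqnorm (Mv w) - t * (1 - t) * sqnorm (Mv (w - u)))))).
  by apply: ler_wpM2l => //; rewrite lerD2r; exact: lerD.
by rewrite le_eqVlt; apply/orP; left; apply/eqP; ring.
Qed.


Lemma strict_lemma x z d : 0 < d ->
  (forall v, feasible s1 s2 v -> enorm (v - x) < d -> f x <= f v) ->
  feasible s1 s2 z -> (forall j, z j 0 = 0 -> x j 0 = 0) -> z <> x -> f x < f z.
Proof.
move=> d0 hloc hz hsub zx.
have w0 : z - x != 0 by rewrite subr_eq0; apply/eqP.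
have wsupp : forall j, z j 0 = 0 -> (z - x) j 0 = 0.
  by move=> j zj; rewrite !mxE zj (hsub j zj) subrr.
have wf := feasible_mono wsupp hz.
have K0 : 0 < sqnorm (Mv (z - x)).
  rewrite lt_neqAle sqnorm_ge0 andbT eq_sym; apply/eqP => /sqnorm_eq0 /(Mv_inj _ wf) e.
  by move: w0; rewrite e eqxx.
have E0 : 0 < enorm (z - x) by exact: enorm_gt0.
set E := enorm (z - x) in E0.
set t := d / (d + E).
have dE0 : 0 < d + E by exact: addr_gt0.
have t0 : 0 < t by exact: divr_gt0.
have t1 : t < 1 by rewrite /t ltr_pdivrMr // mul1r ltrDl.
have vf : feasible s1 s2 (x + t *: (z - x)).
  apply: (feasible_mono _ hz) => j zj.
  by rewrite !mxE zj (hsub j zj) subrr mulr0 addr0.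
have vd : enorm (x + t *: (z - x) - x) < d.
  rewrite addrC addKr enormZ gtr0_norm // -/E /t mulrAC ltr_pdivrMr //.
  by rewrite ltr_pM2l // ltrDr.
have h1 := hloc _ vf vd.
have h2 := f_conv x z t (ltW t0) (ltW t1).
have P0 : 0 < t * (1 - t) * (c / 2 * n%:R^-1) * sqnorm (Mv (z - x)).
  apply: mulr_gt0 => //; apply: mulr_gt0; first by apply: mulr_gt0 => //; rewrite subr_gt0.
  by apply: mulr_gt0; [exact: divr_gt0 | rewrite invr_gt0 ltr0n].
have : t * f x < t * f z by lra.
by rewrite ltr_pM2l.
Qed.


Lemma isolated bt : local_minimizer s1 s2 f bt ->
  exists2 d : R, 0 < d &
    forall bt', feasible s1 s2 bt' -> enorm (bt' - bt) < d -> bt' <> bt ->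
      f bt < f bt'.
Proof.
move=> [hbt [d d0 hloc]].
have [e e0 he] := @supp_bound _ _ bt.
exists (Num.min d e); first by rewrite lt_min d0 e0.
move=> z hz zd zne; apply: (@strict_lemma bt z d d0 hloc hz _ zne).
move=> j zj; apply/eqP; apply: contraT => nz.
have := he j nz; have := enorm_entry (z - bt) j.
rewrite !mxE zj sub0r normrN => h1 h2.
have := le_lt_trans (le_trans h2 h1) zd; rewrite lt_min => /andP[_].
by rewrite ltxx.
Qed.

Definition suppv (bt : 'cV[R]_(p1 + p2)) : {set 'I_(p1 + p2)} :=
  [set j | bt j 0 != 0]%SET.

Lemma finite_locmin : finite_set [set bt | local_minimizer s1 s2 f bt].
Proof.
pose g (T : {set 'I_(p1 + p2)}) :=
  xget 0 [set z | local_minimizer s1 s2 f z /\ suppv z = T].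
apply: (@sub_finite_set _ _ (g @` setT)); last first.
  by apply: finite_image; exact: finite_finset.
move=> x hx; exists (suppv x) => //.
have [hz1 hz2] : [set z | local_minimizer s1 s2 f z /\ suppv z = suppv x] (g (suppv x)).
  by apply: xgetPex; exists x.
move: (g (suppv x)) hz1 hz2 => z hz hs.
apply: contrapT => zx.
have sub1 : forall j, z j 0 = 0 -> x j 0 = 0.
  move=> j zj; apply/eqP; apply: contraT => nz.
  have : j \in suppv x by rewrite inE.
  by rewrite -hs inE zj eqxx.
have sub2 : forall j, x j 0 = 0 -> z j 0 = 0.
  move=> j xj; apply/eqP; apply: contraT => nz.
  have : j \in suppv z by rewrite inE.
  by rewrite hs inE xj eqxx.
case: hx => [hxf [dx dx0 hlx]]; case: hz => [hzf [dz dz0 hlz]].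
have h1 := @strict_lemma x z dx dx0 hlx hzf sub1 zx.
have h2 := @strict_lemma z x dz dz0 hlz hxf sub2 (fun e => zx (esym e)).
by have := lt_trans h1 h2; rewrite ltxx.
Qed.


Lemma ell_ge0 m (A : 'M[R]_(n, m)) v : 0 <= ell l A y v.
Proof.
move: hy; rewrite /ell; case: l => [_|hy'].
  apply: mulr_ge0; first by rewrite invr_ge0.
  by apply: sumr_ge0 => i _; exact: sqr_ge0.
apply: sumr_ge0 => i _; case: (hy' erefl i) => ->.
  by rewrite mul0r subr0 ln_ge0 // lerDl expR_ge0.
rewrite mul1r subr_ge0 -[X in X <= _](expRK ((A *m v) i 0)).
have h : expR ((A *m v) i 0) <= 1 + expR ((A *m v) i 0) by rewrite lerDr.
rewrite ler_ln ?posrE ?h // ?expR_gt0 // addr_gt0 // expR_gt0.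
Qed.

Lemma f_lower bt : c / 2 * n%:R^-1 * sqnorm (Mv bt) <= f bt.
Proof.
rewrite /fobj -/(Mv bt).
have -> : n%:R^-1 * (a * ell l X y (usubmx bt) + b * ell l Z y (dsubmx bt) +
   c / 2 * sqnorm (Mv bt)) = c / 2 * n%:R^-1 * sqnorm (Mv bt) +
   n%:R^-1 * (a * ell l X y (usubmx bt) + b * ell l Z y (dsubmx bt)) by ring.
rewrite lerDl; apply: mulr_ge0; first by rewrite invr_ge0.
by apply: addr_ge0; apply: mulr_ge0; try exact: ltW; exact: ell_ge0.
Qed.


Lemma FS_closed : closed [set v : 'rV[R]_(p1 + p2) | feasible s1 s2 v^T].
Proof.
move=> v cl.
have [e e0 he] := @supp_bound _ _ v^T.
have [w [hw bw]] := cl _ (nbhsx_ballx v e e0).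
apply: (feasible_mono _ hw) => j wj.
apply/eqP; apply: contraT => nz.
have := he j nz; case: bw => _ /(_ 0 j).
rewrite /ball /= !mxE.
move: wj; rewrite mxE => ->; rewrite subr0 => h1 h2.
by have := lt_le_trans h1 h2; rewrite ltxx.
Qed.


Local Notation N := (p1 + p2).

Lemma cont_form m (coef : 'I_m -> R) (idx : 'I_m -> 'I_N) :
  continuous (fun v : 'rV[R]_N => \sum_k coef k * v 0 (idx k)).
Proof.
apply: continuous_big => [|k _]; first exact: add_continuous.
move=> v; apply: continuousM; first exact: cst_continuous.
exact: coord_continuous.
Qed.

Lemma cont_sq (g : 'rV[R]_N -> R) : continuous g -> continuous (fun v => g v ^+ 2).
Proof. by move=> hg v; apply: continuousM; exact: hg. Qed.

Lemma cont_usub i : continuous (fun v : 'rV[R]_N => (X *m usubmx v^T) i 0).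
Proof.
have -> : (fun v : 'rV[R]_N => (X *m usubmx v^T) i 0) =
    (fun v => \sum_k X i k * v 0 (lshift p2 k)).
  by apply/funext => v; rewrite !mxE; apply: eq_bigr => k _; rewrite !mxE.
exact: cont_form.
Qed.

Lemma cont_dsub i : continuous (fun v : 'rV[R]_N => (Z *m dsubmx v^T) i 0).
Proof.
have -> : (fun v : 'rV[R]_N => (Z *m dsubmx v^T) i 0) =
    (fun v => \sum_k Z i k * v 0 (rshift p1 k)).
  by apply/funext => v; rewrite !mxE; apply: eq_bigr => k _; rewrite !mxE.
exact: cont_form.
Qed.

Lemma cont_ell m (A : 'M[R]_(n, m)) (h : 'rV[R]_N -> 'cV[R]_m) :
  (forall i, continuous (fun v => (A *m h v) i 0)) ->
  continuous (fun v => ell l A y (h v)).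
Proof.
move=> hc0; rewrite /ell; case: l.
  move=> v; apply: (@continuousM _ _ (fun=> 2^-1) (fun v0 => \sum_(i < n) (y i 0 - (A *m h v0) i 0) ^+ 2)); first exact: cst_continuous.
  move: v; apply: continuous_big => [|i _]; first exact: add_continuous.
  apply: cont_sq => v; apply: continuousB; first exact: cst_continuous.
  exact: hc0.
apply: continuous_big => [|i _]; first exact: add_continuous.
move=> v; apply: (@continuousB _ _ _ (fun v => ln (1 + expR ((A *m h v) i 0)))
   (fun v => y i 0 * (A *m h v) i 0)); last first.
  apply: (@continuousM _ _ (fun=> y i 0) (fun v => (A *m h v) i 0)).
    exact: cst_continuous.
  exact: hc0.
have h1 : {for v, continuous (fun v => (A *m h v) i 0)} by exact: hc0.
have h2 := continuous_comp h1 (@continuous_expR _ ((A *m h v) i 0)).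
have h3 : {for v, continuous (fun v => 1 + expR ((A *m h v) i 0))}.
  have hk : {for v, continuous (fun=> (1:R))} by exact: cst_continuous.
  exact (continuousD hk h2).
have h4 : {for (1 + expR ((A *m h v) i 0)), continuous (@ln R)}.
  by apply: continuous_ln; rewrite addr_gt0 ?expR_gt0.
exact (continuous_comp h3 h4).
Qed.

Lemma cont_Mv : continuous (fun v : 'rV[R]_N => sqnorm (Mv v^T)).
Proof.
apply: continuous_big => [|i _]; first exact: add_continuous.
apply: cont_sq.
have -> : (fun v : 'rV[R]_N => (Mv v^T) i 0) =
  (fun v => (X *m usubmx v^T) i 0 - (Z *m dsubmx v^T) i 0).
  by apply/funext => v; rewrite /Mv !mxE.
move=> v; apply: continuousB; [exact: cont_usub | exact: cont_dsub].
Qed.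

Lemma cont_f : continuous (fun v : 'rV[R]_N => f v^T).
Proof.
rewrite /fobj -/(Mv _) => v.
have hE1 := @cont_ell _ X (fun v : 'rV[R]_N => usubmx v^T) cont_usub v.
have hE2 := @cont_ell _ Z (fun v : 'rV[R]_N => dsubmx v^T) cont_dsub v.
have hS := cont_Mv v.
have ca : {for v, continuous (fun=> a)} by exact: cst_continuous.
have cb : {for v, continuous (fun=> b)} by exact: cst_continuous.
have cc : {for v, continuous (fun=> c / 2)} by exact: cst_continuous.
have cn : {for v, continuous (fun=> n%:R^-1 : R)} by exact: cst_continuous.
exact (continuousM cn (continuousD (continuousD (continuousM ca hE1)
  (continuousM cb hE2)) (continuousM cc hS))).
Qed.


Lemma trmxZ' m (k : R) (v : 'rV[R]_m) : (k *: v)^T = k *: v^T.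
Proof. by apply/matrixP => i j; rewrite !mxE. Qed.

Lemma MvZ k bt : Mv (k *: bt) = k *: Mv bt.
Proof.
rewrite /Mv.
have -> : usubmx (k *: bt) = k *: usubmx bt by apply/matrixP => ? ?; rewrite !mxE.
have -> : dsubmx (k *: bt) = k *: dsubmx bt by apply/matrixP => ? ?; rewrite !mxE.
by rewrite -!scalemxAr scalerBr.
Qed.

Lemma l0norm_zero m (u : 'cV[R]_m) : (forall j, u j 0 = 0) -> l0norm u = 0%N.
Proof.
move=> H; apply/eqP; rewrite cards_eq0; apply/eqP/setP => j.
by rewrite !inE H eqxx.
Qed.

Lemma feasible0 : feasible s1 s2 (0 : 'cV[R]_N).
Proof. by split; rewrite l0norm_zero // => j; rewrite !mxE. Qed.

Lemma exists_nz : exists2 e : 'cV[R]_N, feasible s1 s2 e & e != 0.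
Proof.
have p10 : (0 < p1)%N by case/andP: hs1 => h1 h2; exact: leq_trans h1 h2.
pose i0 := Ordinal p10.
exists (\col_j (j == lshift p2 i0)%:R).
  split.
    apply: (@leq_trans #|[set i0]%SET|); last by rewrite cards1; case/andP: hs1.
    apply: subset_leq_card; apply/fintype.subsetP => i.
    rewrite !inE !mxE; case: (lshift p2 i =P lshift p2 i0) => [/lshift_inj -> _|_].
      by rewrite eqxx.
    by rewrite eqxx.
  rewrite l0norm_zero // => k; rewrite !mxE; case: (rshift p1 k =P lshift p2 i0) => // /(congr1 val) /= e.
  have : (0 < p1 + k)%N by rewrite (leq_trans p10) // leq_addr.
  by rewrite e.
apply/eqP => /matrixP /(_ (lshift p2 i0) 0); rewrite !mxE eqxx => /eqP.
by rewrite oner_eq0.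
Qed.

Lemma bounded_le (A : set 'rV[R]_N) r : (forall v, A v -> `|v| <= r) -> bounded_set A.
Proof.
move=> H; suff : [bounded x | x in A] by []; rewrite /bounded_near.
near=> M => v Av.
apply: le_trans (H v Av) _; near: M; apply: nbhs_pinfty_ge; exact: num_real.
Unshelve. all: by end_near.
Qed.

Lemma closed_norm (P : set R) : closed P -> closed [set v : 'rV[R]_N | P `|v|].
Proof.
move=> cP; have := @preimage_closed _ _ (fun v : 'rV[R]_N => `|v|) P _ cP.
by apply => x _; exact: norm_continuous.
Qed.


Lemma kappa : exists2 k : R, 0 < k &
  forall bt, feasible s1 s2 bt -> k * `|bt^T| ^+ 2 <= sqnorm (Mv bt).
Proof.
pose K := [set v : 'rV[R]_N | feasible s1 s2 v^T] `&` [set v | `|v| = 1].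
have cK : compact K.
  apply: bounded_closed_compact.
    by apply: (@bounded_le _ 1) => v [_ /= ->].
  apply: closedI; first exact: FS_closed.
  exact (closed_norm _ (@closed_eq R 1)).
have K0 : K !=set0.
  have [e fe e0] := exists_nz.
  have ne : `|e^T| != 0.
    rewrite normr_eq0; apply: contra e0 => /eqP h; apply/eqP.
    by rewrite -[e]trmxK h trmx0.
  exists (`|e^T|^-1 *: e^T); split.
    rewrite /= trmxZ' trmxK; apply: (feasible_mono _ fe) => j ej.
    by rewrite !mxE ej mulr0.
  by rewrite /= normrZ normfV normr_id mulVf.
have [c0 /set_mem [fc0 nc0] hmin] := EVT_min_rV K0 cK (@continuous_subspaceT _ _ K _ cont_Mv).
exists (sqnorm (Mv c0^T)).
  rewrite lt_neqAle sqnorm_ge0 andbT eq_sym; apply/eqP => /sqnorm_eq0 /(Mv_inj _ fc0) h0.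
  move: nc0; rewrite -[c0]trmxK h0 trmx0 /= normr0 => /eqP; rewrite eq_sym oner_eq0.
  by [].
move=> bt fbt.
have [->|nz] := eqVneq bt 0.
  by rewrite trmx0 normr0 expr0n /= mulr0 sqnorm_ge0.
have r0 : 0 < `|bt^T|.
  rewrite normr_gt0; apply: contra nz => /eqP h; apply/eqP.
  by rewrite -[bt]trmxK h trmx0.
have Ku : K (`|bt^T|^-1 *: bt^T).
  split.
    rewrite /= trmxZ' trmxK; apply: (feasible_mono _ fbt) => j ej.
    by rewrite !mxE ej mulr0.
  by rewrite /= normrZ normfV normr_id mulVf ?gt_eqF.
have := hmin _ (mem_set Ku); rewrite /= trmxZ' trmxK MvZ sqnormZ => h.
apply: le_trans (ler_wpM2r (sqr_ge0 `|bt^T|) h) _.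
by rewrite mulrAC -exprMn mulVf ?gt_eqF // expr1n mul1r.
Qed.


Lemma exists_min : exists bt, global_minimizer s1 s2 f bt.
Proof.
have [k k0 hk] := kappa.
have cn0 : 0 < c / 2 * n%:R^-1.
  by apply: mulr_gt0; [exact: divr_gt0 | rewrite invr_gt0 ltr0n].
set q := c / 2 * n%:R^-1 * k.
have q0 : 0 < q by exact: mulr_gt0.
have flow : forall bt, feasible s1 s2 bt -> q * `|bt^T| ^+ 2 <= f bt.
  move=> bt fb; apply: le_trans (f_lower bt); rewrite /q -mulrA.
  by apply: ler_wpM2l; [exact: ltW | exact: hk].
have F00 : 0 <= f 0.
  apply: le_trans (f_lower 0); apply: mulr_ge0; [exact: ltW | exact: sqnorm_ge0].
set r := 1 + f 0 / q.
have r1 : 1 <= r by rewrite /r lerDl divr_ge0 // ltW.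
pose B := [set v : 'rV[R]_N | feasible s1 s2 v^T] `&` [set v | `|v| <= r].
have cB : compact B.
  apply: bounded_closed_compact.
    by apply: (@bounded_le _ r) => v [_ /=].
  apply: closedI; first exact: FS_closed.
  exact (closed_norm _ (@closed_le R r)).
have B0' : B 0.
  split; first by rewrite /= trmx0; exact: feasible0.
  by rewrite /= normr0 (le_trans ler01 r1).
have B0 : B !=set0 by exists 0.
have [c0 /set_mem [fc0 nc0] hmin] := EVT_min_rV B0 cB (@continuous_subspaceT _ _ B _ cont_f).
exists c0^T; split => // bt fb.
have [le|gt] := lerP `|bt^T| r.
  have Bb : B bt^T by split => //=; rewrite trmxK.
  by have := hmin _ (mem_set Bb); rewrite trmxK.
have h0 := hmin _ (mem_set B0'); rewrite trmx0 in h0.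
apply: le_trans h0 _.
have e : q * (r - 1) = f 0.
  by rewrite /r addrAC subrr add0r mulrCA mulfV ?gt_eqF // mulr1.
have x1 : 1 < `|bt^T| by exact: le_lt_trans r1 gt.
have : r - 1 < `|bt^T| ^+ 2 by nra.
rewrite -(ltr_pM2l q0) e => /ltW h.
exact: le_trans h (flow _ fb).
Qed.

End Main.

Theorem theorem3p5 (R : realType) (l : loss) (n p1 p2 s1 s2 : nat)
  (X : 'M[R]_(n, p1)) (Z : 'M[R]_(n, p2)) (y : 'cV[R]_n) (a b c : R)
  (hn : (0 < n)%N) (ha : 0 < a) (hb : 0 < b) (hc : 0 < c)
  (hs1 : (1 <= s1 <= p1)%N) (hs2 : (1 <= s2 <= p2)%N)
  (hy : l = LossLog -> forall i, y i 0 = 0 \/ y i 0 = 1)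
  (hreg : s_regular (row_mx X Z) (s1 + s2)) :
  let f := fobj l X Z y a b c in
  (exists bt, global_minimizer s1 s2 f bt) /\
  finite_set [set bt | local_minimizer s1 s2 f bt] /\
  (forall bt, local_minimizer s1 s2 f bt ->
     exists2 d : R, 0 < d &
       forall bt', feasible s1 s2 bt' -> enorm (bt' - bt) < d -> bt' <> bt ->
         f bt < f bt').
Proof.
move=> f; split.
  exact: (@exists_min R l n p1 p2 s1 s2 X Z y a b c hn ha hb hc hs1 hs2 hy hreg).
split.
  exact: (@finite_locmin R l n p1 p2 s1 s2 X Z y a b c hn ha hb hc hs1 hs2 hreg).
exact: (@isolated R l n p1 p2 s1 s2 X Z y a b c hn ha hb hc hs1 hs2 hreg).
Qed.
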